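(* There exists $P\in\mathbb R^{L(m+r)\times(Lm+n)}$ with $\mathrm{im}P=\mathscr P$ and $P^\top P=I$. Further, for such $P$, the IOH $v$ satisfies $\hat v(t+1)=P^\top\Theta P\hat v(t)+P^\top\Pi u(t)$, $v(t)=P\hat v(t)$ for $t\ge L$, where $\hat v(L)=P^\top v(L)$. Besides, if $v(L)\sim\mathcal N_\Phi$ where $\Phi\ge0$ satisfies $\mathrm{im}\Phi=\mathscr P$, then $\hat v(L)\sim\mathcal N_{\hat\Phi}$ with $\hat\Phi:=P^\top\Phi P>0$.
   Context: System $\Sigma_s$: $x(t+1)=Ax(t)+Bu(t)$, $y(t)=Cx(t)$, $t\ge0$, $x\in\mathbb R^n,u\in\mathbb R^m,y\in\mathbb R^r$; standing assumptions: $(A,B,C)$ minimal, $A$ Schur. $\mathcal R_L=[A^{L-1}B,\dots,B]$, $\mathcal O_L=[C^\top,\dots,(CA^{L-1})^\top]^\top$, $\mathcal H_L$ the $Lr\times Lm$ block lower-triangular Toeplitz matrix with $(i,j)$ block $H_{i-j}$, $H_0=0$, $H_k=CA^{k-1}B$. Fix $L$ with $\operatorname{rank}\mathcal O_L=n$. IOH: $v(t)=[u(t-L)^\top,\dots,u(t-1)^\top,y(t-L)^\top,\dots,y(t-1)^\top]^\top$, $t\ge L$. $\Gamma=[\mathcal R_L-A^L\mathcal O_L^\dagger\mathcal H_L,\ A^L\mathcal O_L^\dagger]$; $\Theta=\mathrm{diag}(S_m,S_r)+EC\Gamma$, with $S_k$ the $Lk\times Lk$ block matrix having $I_k$ in blocks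 $(i,i+1)$, $i<L$, zeros elsewhere, $E$ having $I_r$ in its last $r$ rows, zeros elsewhere; $\Pi$ has $I_m$ in rows $(L-1)m+1,\dots,Lm$, zeros elsewhere. The IOH obeys $v(t+1)=\Theta v(t)+\Pi u(t)$, $y=C\Gamma v$, $t\ge L$. $\mathscr P=\mathrm{im}[\Theta^{L(m+r)-1}\Pi,\dots,\Theta\Pi,\Pi]$. $\mathcal N_\Phi$ denotes a Gaussian distribution whose second moment about zero is $\Phi$. *)

(* Defs.v *)
From HB Require Import structures.
From mathcomp Require Import all_boot all_order all_algebra.
From mathcomp Require Import all_classical all_reals all_analysis.
From mathcomp Require Import complex.

Set Implicit Arguments.
Unset Strict Implicit.
Unset Printing Implicit Defensive.

Import Order.TTheory GRing.Theory Num.Theory.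
Local Open Scope ring_scope.
Local Open Scope classical_set_scope.

(* Block-matrix helpers.  An index k : 'I_(p * a) is split as the pair *)
(* (block, offset) : 'I_p * 'I_a, with k = block * a + offset (the same *)
(* row-major convention as mathcomp's mxvec_index).                   *)
Definition bidx {p a : nat} (k : 'I_(p * a)) : 'I_p * 'I_a :=
  enum_val (cast_ord (esym (mxvec_cast p a)) k).

Definition blockmx {R : Type} {p q a b : nat}
  (f : 'I_p -> 'I_q -> 'M[R]_(a, b)) : 'M[R]_(p * a, q * b) :=
  \matrix_(i, j) f (bidx i).1 (bidx j).1 (bidx i).2 (bidx j).2.

Definition bcol {R : Type} {p a b : nat}
  (f : 'I_p -> 'M[R]_(a, b)) : 'M[R]_(p * a, b) :=
  \matrix_(i, j) f (bidx i).1 (bidx i).2 j.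

Definition brow {R : Type} {q a b : nat}
  (f : 'I_q -> 'M[R]_(a, b)) : 'M[R]_(a, q * b) :=
  \matrix_(i, j) f (bidx j).1 i (bidx j).2.

Definition same_image {R : fieldType} {p a b : nat}
  (A : 'M[R]_(p, a)) (B : 'M[R]_(p, b)) : bool := (A^T == B^T)%MS.

Definition is_mp_pinv {R : fieldType} {p q : nat}
  (M : 'M[R]_(p, q)) (X : 'M[R]_(q, p)) : Prop :=
  [/\ M *m X *m M = M, X *m M *m X = X,
      (M *m X)^T = M *m X & (X *m M)^T = X *m M].

Definition psd {R : realFieldType} {N : nat} (M : 'M[R]_N) : Prop :=
  M^T = M /\ forall x : 'cV[R]_N, 0 <= (x^T *m M *m x) 0 0.
Definition posdef {R : realFieldType} {N : nat} (M : 'M[R]_N) : Prop :=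
  M^T = M /\ forall x : 'cV[R]_N, x != 0 -> 0 < (x^T *m M *m x) 0 0.

Definition schur {R : rcfType} {n : nat} (A : 'M[R]_n) : Prop :=
  forall l : R[i], eigenvalue (map_mx (real_complex R) A) l -> `|l| < 1.

Section SystemMatrices.
Variables (R : fieldType) (n m r : nat).
Variables (A : 'M[R]_n) (B : 'M[R]_(n, m)) (C : 'M[R]_(r, n)).

Definition ctrb (L : nat) : 'M[R]_(n, L * m) :=
  brow (fun j : 'I_L => A ^+ (L - 1 - j) *m B).

Definition obsv (L : nat) : 'M[R]_(L * r, n) :=
  bcol (fun i : 'I_L => C *m A ^+ i).

Definition toeplitz (L : nat) : 'M[R]_(L * r, L * m) :=
  blockmx (fun i j : 'I_L =>
    if (j < i)%N then C *m A ^+ (i - j - 1) *m B else 0).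

Variables (L : nat) (Od : 'M[R]_(n, L * r)).

Definition Gamma : 'M[R]_(n, L * m + L * r) :=
  row_mx (ctrb L - A ^+ L *m Od *m toeplitz L) (A ^+ L *m Od).

Definition shiftmx (k : nat) : 'M[R]_(L * k) :=
  blockmx (fun i j : 'I_L => if (j == i.+1 :> nat) then 1%:M else 0).

Definition lastblk (k : nat) : 'M[R]_(L * k, k) :=
  bcol (fun i : 'I_L => if (i == L.-1 :> nat) then 1%:M else 0).

Definition Emx : 'M[R]_(L * m + L * r, r) := col_mx 0 (lastblk r).
Definition Pimx : 'M[R]_(L * m + L * r, m) := col_mx (lastblk m) 0.

Definition Theta : 'M[R]_(L * m + L * r) :=
  block_mx (shiftmx m) 0 0 (shiftmx r) + Emx *m C *m Gamma.

(* generator of the subspace scrP: [Theta^(N-1) Pi, ..., Theta Pi, Pi], N = L(m+r) *)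
Definition PPgen : 'M[R]_(L * m + L * r, (L * m + L * r) * m) :=
  brow (fun k : 'I_(L * m + L * r) =>
    Theta ^+ (L * m + L * r - 1 - k) *m Pimx).

Fixpoint state (x0 : 'cV[R]_n) (u : nat -> 'cV[R]_m) (t : nat) : 'cV[R]_n :=
  match t with
  | 0 => x0
  | t'.+1 => A *m state x0 u t' + B *m u t'
  end.

Definition output x0 u t : 'cV[R]_r := C *m state x0 u t.

(* IOH v(t) = [u(t-L); ...; u(t-1); y(t-L); ...; y(t-1)]  (meaningful for t >= L) *)
Definition ioh (x0 : 'cV[R]_n) (u : nat -> 'cV[R]_m) (t : nat)
  : 'cV[R]_(L * m + L * r) :=
  col_mx (bcol (fun k : 'I_L => u (t - L + k)%N))
         (bcol (fun k : 'I_L => output x0 u (t - L + k)%N)).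

End SystemMatrices.

Definition gaussian_rv {d} {T : measurableType d} {R : realType}
  (P : probability T R) (f : T -> R) (mn s2 : R) : Prop :=
  measurable_fun setT f /\
  forall B : set R, measurable B ->
    P (f @^-1` B) = (if s2 == 0 then \d_mn B else normal_prob mn (Num.sqrt s2) B).

Definition gaussian_vec {d} {T : measurableType d} {R : realType} {N : nat}
  (P : probability T R) (X : T -> 'cV[R]_N) : Prop :=
  forall a : 'cV[R]_N, exists mn s2 : R,
    0 <= s2 /\ gaussian_rv P (fun w => (a^T *m X w) 0 0) mn s2.

(* X ~ N_Phi : X is Gaussian and its second moment about zero E[X X^T] is Phi *)
Definition normal_mom2 {d} {T : measurableType d} {R : realType} {N : nat}
  (P : probability T R) (X : T -> 'cV[R]_N) (Phi : 'M[R]_N) : Prop :=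
  gaussian_vec P X /\
  forall i j : 'I_N, ('E_P[fun w => (X w i ord0 * X w j ord0)%R] = (Phi i j)%:E)%E.

(* Main.v *)
Require Import Defs.
From HB Require Import structures.
From mathcomp Require Import all_boot all_order all_algebra.
From mathcomp Require Import all_classical all_reals all_analysis.
From mathcomp Require Import complex.
From mathcomp Require Import measurable_realfun.
From mathcomp Require Import zify.
From mathcomp Require Import ring lra.
Import Order.TTheory GRing.Theory Num.Theory.
Local Open Scope ring_scope.
Set Implicit Arguments.
Unset Strict Implicit.
Unset Printing Implicit Defensive.

Section BIdx.
Variables p a : nat.
Definition bidxI (x : 'I_p * 'I_a) : 'I_(p * a) :=
  cast_ord (mxvec_cast p a) (enum_rank x).
Lemma bidxK : cancel (@bidx p a) bidxI.
Proof. by move=> k; rewrite /bidx /bidxI enum_valK cast_ordKV. Qed.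
Lemma bidxIK : cancel bidxI (@bidx p a).
Proof. by move=> x; rewrite /bidx /bidxI cast_ordK enum_rankK. Qed.
Lemma big_bidx (V : nmodType) (F : 'I_(p * a) -> V) :
  \sum_(k < p * a) F k = \sum_(j < p) \sum_(i < a) F (bidxI (j, i)).
Proof.
rewrite pair_big /= (reindex bidxI) /=; first by apply: eq_bigr => -[].
by exists (@bidx p a) => x _; rewrite ?bidxK ?bidxIK.
Qed.
End BIdx.

Section BlockMx.
Variable R : fieldType.
Definition bsub p a c (D : 'M[R]_(p * a, c)) (j : 'I_p) : 'M[R]_(a, c) :=
  \matrix_(i, l) D (bidxI (j, i)) l.
Lemma bcolK p a c (D : 'M[R]_(p * a, c)) : bcol (bsub D) = D.
Proof. by apply/matrixP => i j; rewrite !mxE -surjective_pairing bidxK. Qed.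
Lemma bsubK p a c (f : 'I_p -> 'M[R]_(a, c)) j : bsub (bcol f) j = f j.
Proof. by apply/matrixP => i l; rewrite !mxE bidxIK. Qed.
Lemma bcol_ext p a c (f g : 'I_p -> 'M[R]_(a, c)) :
  (forall j, f j = g j) -> bcol f = bcol g.
Proof. by move=> e; apply/matrixP => i l; rewrite !mxE e. Qed.
Lemma brow_ext p a c (f g : 'I_p -> 'M[R]_(a, c)) :
  (forall j, f j = g j) -> brow f = brow g.
Proof. by move=> e; apply/matrixP => i l; rewrite !mxE e. Qed.
Lemma brow_mul q a b c (f : 'I_q -> 'M[R]_(a, b)) (g : 'I_q -> 'M[R]_(b, c)) :
  brow f *m bcol g = \sum_j f j *m g j.
Proof.
apply/matrixP => i l; rewrite !mxE big_bidx summxE; apply: eq_bigr => j _.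
by rewrite !mxE; apply: eq_bigr => k _; rewrite !mxE bidxIK.
Qed.
Lemma blockmx_mul p q a b c (f : 'I_p -> 'I_q -> 'M[R]_(a, b))
   (g : 'I_q -> 'M[R]_(b, c)) :
  blockmx f *m bcol g = bcol (fun i => \sum_j f i j *m g j).
Proof.
apply/matrixP => i l; rewrite !mxE big_bidx summxE; apply: eq_bigr => j _.
by rewrite !mxE; apply: eq_bigr => k _; rewrite !mxE bidxIK.
Qed.
Lemma bcol_mulr p a b c (f : 'I_p -> 'M[R]_(a, b)) (M : 'M[R]_(b, c)) :
  bcol f *m M = bcol (fun i => f i *m M).
Proof. by apply/matrixP => i l; rewrite !mxE; apply: eq_bigr => k _; rewrite !mxE. Qed.
Lemma brow_mull q a b c (f : 'I_q -> 'M[R]_(b, c)) (M : 'M[R]_(a, b)) :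
  M *m brow f = brow (fun j => M *m f j).
Proof. by apply/matrixP => i l; rewrite !mxE; apply: eq_bigr => k _; rewrite !mxE. Qed.
Lemma bcolD p a c (f g : 'I_p -> 'M[R]_(a, c)) :
  bcol f + bcol g = bcol (fun i => f i + g i).
Proof. by apply/matrixP => i l; rewrite !mxE. Qed.
Lemma bcol0 p a c : bcol (fun i : 'I_p => (0 : 'M[R]_(a,c))) = 0.
Proof. by apply/matrixP => i l; rewrite !mxE. Qed.
End BlockMx.

Lemma mxexpS (R : fieldType) k (M : 'M[R]_k) i : M ^+ i.+1 = M *m M ^+ i.
Proof. exact: exprS. Qed.
Lemma mxexp0 (R : fieldType) k (M : 'M[R]_k) : M ^+ 0 = 1%:M.
Proof. by []. Qed.

Lemma ar1 i j : (j < i)%N -> (i.+1 - 1 - j = (i - 1 - j).+1)%N. Proof. lia. Qed.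
Lemma ar2 i : (i.+1 - 1 - i = 0)%N. Proof. lia. Qed.

Section Sys.
Variables (R : fieldType) (n m r : nat).
Variables (A : 'M[R]_n) (B : 'M[R]_(n, m)) (C : 'M[R]_(r, n)).

Lemma state_add x0 u s i : state A B x0 u (s + i) =
  A ^+ i *m state A B x0 u s + \sum_(j < i) A ^+ (i - 1 - j) *m B *m u (s + j)%N.
Proof.
elim: i => [|i IH]; first by rewrite addn0 mxexp0 mul1mx big_ord0 addr0.
rewrite addnS /= IH big_ord_recr /= mulmxDr mulmxA -mxexpS addrA; congr (_ + _ + _).
  rewrite mulmx_sumr; apply: eq_bigr => j _; rewrite !mulmxA -mxexpS.
  have hj := ltn_ord j.
  have -> : (i.+1 - 1 - j = (i - 1 - j).+1)%N by apply: ar1.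
  by [].
by rewrite ar2 mxexp0 mul1mx.
Qed.

Lemma ctrb_mul L (g : 'I_L -> 'cV[R]_m) :
  ctrb A B L *m bcol g = \sum_(j < L) A ^+ (L - 1 - j) *m B *m g j.
Proof. by rewrite /ctrb brow_mul. Qed.

Lemma state_addL x0 u s L : state A B x0 u (s + L) =
  A ^+ L *m state A B x0 u s + ctrb A B L *m bcol (fun k : 'I_L => u (s + k)%N).
Proof. by rewrite state_add ctrb_mul. Qed.

Lemma obsv_mul L (x : 'cV[R]_n) : obsv A C L *m x = bcol (fun i : 'I_L => C *m A ^+ i *m x).
Proof. by rewrite /obsv bcol_mulr. Qed.

Lemma ioh_formula L x0 u t : (L <= t)%N ->
  ioh A B C L x0 u t = col_mx (bcol (fun k : 'I_L => u (t - L + k)%N))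
     (obsv A C L *m state A B x0 u (t - L) +
      toeplitz A B C L *m bcol (fun k : 'I_L => u (t - L + k)%N)).
Proof.
move=> Lt; rewrite /ioh; congr col_mx.
rewrite obsv_mul /toeplitz blockmx_mul bcolD; apply: bcol_ext => i.
rewrite /output state_add mulmxDr !mulmxA; congr (_ + _).
rewrite mulmx_sumr.
pose F := fun j : nat => C *m (A ^+ (i - 1 - j) *m B *m u (t - L + j)%N).
transitivity (\sum_(j < i) F j); first by [].
rewrite (big_ord_widen L F (ltnW (ltn_ord i))) big_mkcond /=.
apply: eq_bigr => j _; rewrite /F; case: ifP => _; last by rewrite !mul0mx.
by rewrite !mulmxA subnAC.
Qed.

Lemma Od_obsv L (Od : 'M[R]_(n, L * r)) :
  \rank (obsv A C L) = n -> is_mp_pinv (obsv A C L) Od -> Od *m obsv A C L = 1%:M.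
Proof.
move=> rk [h1 _ _ _].
have : row_free (obsv A C L)^T by rewrite /row_free mxrank_tr rk.
case/row_freeP => D hD.
have hD' : D^T *m obsv A C L = 1%:M by rewrite -[obsv _ _ _]trmxK -trmx_mul hD trmx1.
by rewrite -[Od *m _]mul1mx -hD' -!mulmxA (mulmxA _ Od) h1.
Qed.

Lemma Gamma_ioh L (Od : 'M[R]_(n, L * r)) x0 u t : (L <= t)%N ->
  Od *m obsv A C L = 1%:M ->
  Gamma A B C Od *m ioh A B C L x0 u t = state A B x0 u t.
Proof.
move=> Lt hO; rewrite ioh_formula // /Gamma mul_row_col.
have -> : state A B x0 u t = state A B x0 u (t - L + L) by rewrite subnK.
rewrite state_addL.
rewrite mulmxBl !mulmxDr !mulmxA -(mulmxA _ Od (obsv _ _ _)) hO mulmx1.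
set X := A ^+ L *m Od *m toeplitz A B C L *m _.
set Y := ctrb A B L *m _.
by rewrite [_ *m state _ _ _ _ _ + X]addrC addrA subrK addrC.
Qed.

End Sys.

Lemma ar3 L t i : (L <= t)%N -> (t - L + i.+1 = t.+1 - L + i)%N. Proof. lia. Qed.
Lemma ar4 L (i : nat) : (i < L)%N -> ~~ (i.+1 < L)%N -> (i.+1 = L)%N. Proof. lia. Qed.
Lemma ar5 L (i : nat) : (i.+1 < L)%N -> (i == L.-1) = false. Proof. move=> h; apply/eqP; lia. Qed.

Lemma ar6 L (i : nat) : (i.+1 = L)%N -> (i == L.-1) = true. Proof. move=> h; apply/eqP; lia. Qed.
Lemma ar7 L (i j : 'I_L) : (i.+1 = L)%N -> (j == i.+1 :> nat) = false.
Proof. move=> h; apply/eqP; have := ltn_ord j; lia. Qed.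

Lemma shift_last (R : fieldType) L k c (F : nat -> 'M[R]_(k, c)) :
  shiftmx R L k *m bcol (fun j : 'I_L => F j) + lastblk R L k *m F L =
  bcol (fun i : 'I_L => F i.+1).
Proof.
rewrite /shiftmx blockmx_mul /lastblk bcol_mulr bcolD; apply: bcol_ext => i.
have [h|h] := boolP (i.+1 < L)%N.
  rewrite (bigD1 (Ordinal h)) //= eqxx mul1mx big1 ?add0r.
    by rewrite addr0 ar5 // mul0mx addr0.
  move=> j hj; rewrite ifN ?mul0mx //; apply: contra hj => /eqP e.
have e := ar4 (ltn_ord i) h.
rewrite big1 ?add0r.
  by rewrite ar6 // mul1mx e.
by move=> j _; rewrite ar7 ?mul0mx.
Qed.

Section Dyn.
Variables (R : fieldType) (n m r : nat).
Variables (A : 'M[R]_n) (B : 'M[R]_(n, m)) (C : 'M[R]_(r, n)).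

Lemma ioh_step L (Od : 'M[R]_(n, L * r)) x0 u t : (L <= t)%N ->
  Od *m obsv A C L = 1%:M ->
  ioh A B C L x0 u t.+1 =
  Theta A B C Od *m ioh A B C L x0 u t + Pimx R m r L *m u t.
Proof.
move=> Lt hO; rewrite /Theta mulmxDl -!mulmxA Gamma_ioh //.
rewrite {2}/ioh mul_block_col /Emx /Pimx !mul_col_mx !mul0mx !addr0 !add0r.
rewrite !add_col_mx !addr0 /ioh; congr col_mx.
  have := @shift_last R L m 1 (fun j => u (t - L + j)%N); rewrite subnK // => ->.
  by apply: bcol_ext => i; rewrite ar3.
have := @shift_last R L r 1 (fun j => output A B C x0 u (t - L + j)%N).
rewrite subnK // (_ : C *m state A B x0 u t = output A B C x0 u t) // => ->.
by apply: bcol_ext => i; rewrite ar3.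
Qed.
End Dyn.

Section GS.
Variable R : rcfType.

Lemma rv_norm_pos N (w : 'rV[R]_N) : w != 0 -> 0 < (w *m w^T) 0 0.
Proof.
move=> wn0; rewrite mxE.
have h : forall j : 'I_N, true -> 0 <= w 0 j * w^T j 0.
  by move=> j _; rewrite mxE -expr2 sqr_ge0.
rewrite lt_def sumr_ge0 // andbT; apply: contra wn0 => /eqP /psumr_eq0P e.
apply/eqP/rowP => j; rewrite mxE; have := e h j isT.
by rewrite mxE -expr2 => /eqP; rewrite sqrf_eq0 => /eqP.
Qed.

Lemma gs k N (X : 'M[R]_(k, N)) : row_free X ->
  exists Y : 'M[R]_(k, N), Y *m Y^T = 1%:M /\ (Y == X)%MS.
Proof.
elim: k X => [|k IH] X fX.
  by exists X; split; [apply/matrixP => -[] | apply/andP; split; exact: submx_refl].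
pose X' : 'M[R]_(1 + k, N) := X.
pose x := usubmx X'; pose X1 := dsubmx X'.
have eX : X = col_mx x X1 by rewrite vsubmxK.
have rk : \rank (col_mx x X1) = k.+1 by rewrite -eX; apply/eqP.
have rx : (\rank x <= 1)%N by apply: rank_leq_row.
have rX1 : (\rank X1 <= k)%N by apply: rank_leq_row.
have hadd := mxrank_adds_leqif x X1.
have rks : (\rank (x + X1)%MS = k.+1) by rewrite addsmxE.
have fX1 : row_free X1.
  rewrite /row_free eqn_leq rX1 /=; move: hadd => [le _].
  by move: le; rewrite rks; lia.
have [Y1 [hY1 eY1]] := IH X1 fX1.
pose w := x - x *m Y1^T *m Y1.
have wn0 : w != 0.
  apply/negP => /eqP w0.
  have xs : (x <= X1)%MS.
    have -> : x = x *m Y1^T *m Y1 by apply/eqP; rewrite -subr_eq0; apply/eqP.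
    case/andP: eY1 => s1 _; exact: submx_trans (submxMl _ _) s1.
  have : (\rank (x + X1)%MS = \rank X1) by rewrite (addsmx_idPr xs).
  by rewrite rks; lia.
have nw := rv_norm_pos wn0.
have sM : (w *m w^T) 0 0 = Num.sqrt ((w *m w^T) 0 0) ^+ 2 by rewrite sqr_sqrtr // ltW.
set M := w *m w^T in nw sM *.
set s := Num.sqrt (M 0 0) in sM *.
have s0 : 0 < s by rewrite sqrtr_gt0.
pose y := s^-1 *: w.
have wY : w *m Y1^T = 0.
  by rewrite /w mulmxBl -!mulmxA hY1 mulmx1 subrr.
have yY : y *m Y1^T = 0 by rewrite /y -scalemxAl wY scaler0.
have yy : y *m y^T = 1%:M.
  rewrite /y linearZ /= -scalemxAl -scalemxAr; apply/matrixP => i j.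
  rewrite !ord1 [LHS]mxE [X in _ * X]mxE -/M sM mxE eqxx /=.
  have sn0 : s != 0 by rewrite gt_eqF.
  by rewrite expr2 [s^-1 * (s * s)]mulrA mulVf // mul1r mulVf.
pose Y : 'M[R]_(1 + k, N) := col_mx y Y1.
exists Y; split.
  change (@mulmx _ (1 + k) N (1 + k) Y (@trmx _ (1 + k) N Y) = 1%:M).
  rewrite /Y tr_col_mx mul_col_row yy yY hY1 -(trmxK (Y1 *m y^T)) trmx_mul trmxK yY trmx0.
  by rewrite -scalar_mx_block.
rewrite eX; case/andP: eY1 => s1 s2.
have xX : (x <= col_mx x X1)%MS by rewrite -addsmxE addsmxSl.
have X1X : (X1 <= col_mx x X1)%MS by rewrite -addsmxE addsmxSr.
have yX1 : (y <= col_mx x X1)%MS.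
  apply: scalemx_sub; apply: addmx_sub => //; rewrite eqmx_opp.
  exact: submx_trans (submxMl _ _) (submx_trans s1 X1X).
have Y1Y : (Y1 <= Y)%MS by rewrite /Y -addsmxE addsmxSr.
have yY' : (y <= Y)%MS by rewrite /Y -addsmxE addsmxSl.
have xY : (x <= Y)%MS.
  have -> : x = s *: y + x *m Y1^T *m Y1.
    by rewrite /y scalerA mulfV ?gt_eqF // scale1r /w subrK.
  apply: addmx_sub; first exact: scalemx_sub.
  exact: submx_trans (submxMl _ _) Y1Y.
have h1 : (Y <= col_mx x X1)%MS.
  by rewrite /Y -addsmxE addsmx_sub yX1 (submx_trans s1 X1X).
have h2 : (col_mx x X1 <= Y)%MS.
  by rewrite -addsmxE addsmx_sub xY (submx_trans s2 Y1Y).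
by apply/andP; split; [exact: h1 | exact: h2].
Qed.
End GS.

Definition csub (R : fieldType) p a b (X : 'M[R]_(p, a)) (Y : 'M[R]_(p, b)) :=
  (X^T <= Y^T)%MS.

Section Csub.
Variable R : fieldType.
Implicit Types p a b c : nat.

Lemma csub_trans p a b c (X : 'M[R]_(p, a)) (Y : 'M[R]_(p, b)) (Z : 'M[R]_(p, c)) :
  csub X Y -> csub Y Z -> csub X Z.
Proof. exact: submx_trans. Qed.
Lemma csub_mulr p a b (X : 'M[R]_(p, a)) (D : 'M[R]_(a, b)) : csub (X *m D) X.
Proof. by rewrite /csub trmx_mul submxMl. Qed.
Lemma csub_mulr' p a b c (X : 'M[R]_(p, a)) (D : 'M[R]_(a, b)) (Y : 'M[R]_(p, c)) :
  csub X Y -> csub (X *m D) Y.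
Proof. by move=> h; apply: csub_trans h; apply: csub_mulr. Qed.
Lemma csub_mull p q a b (X : 'M[R]_(p, a)) (Y : 'M[R]_(p, b)) (M : 'M[R]_(q, p)) :
  csub X Y -> csub (M *m X) (M *m Y).
Proof. by rewrite /csub !trmx_mul => h; apply: submxMr. Qed.
Lemma csub_add p a b (X X' : 'M[R]_(p, a)) (Y : 'M[R]_(p, b)) :
  csub X Y -> csub X' Y -> csub (X + X') Y.
Proof. by rewrite /csub linearD /= => h1 h2; apply: addmx_sub. Qed.
Lemma csub_opp p a b (X : 'M[R]_(p, a)) (Y : 'M[R]_(p, b)) :
  csub X Y -> csub (- X) Y.
Proof. by rewrite /csub linearN /= eqmx_opp. Qed.
Lemma csub_scale p a b (k : R) (X : 'M[R]_(p, a)) (Y : 'M[R]_(p, b)) :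
  csub X Y -> csub (k *: X) Y.
Proof. by rewrite /csub linearZ /= => h; apply: scalemx_sub. Qed.
Lemma csub0 p a b (Y : 'M[R]_(p, b)) : csub (0 : 'M[R]_(p, a)) Y.
Proof. by rewrite /csub trmx0 sub0mx. Qed.
Lemma csub_sum p a b (I : finType) (F : I -> 'M[R]_(p, a)) (Y : 'M[R]_(p, b)) :
  (forall i, csub (F i) Y) -> csub (\sum_i F i) Y.
Proof.
move=> h; rewrite /csub raddf_sum /=; apply: summx_sub => i _; exact: h.
Qed.
Lemma csubP p a b (X : 'M[R]_(p, a)) (Y : 'M[R]_(p, b)) :
  csub X Y -> exists D : 'M[R]_(b, a), X = Y *m D.
Proof.
case/submxP => D hD; exists D^T; by rewrite -[X]trmxK hD trmx_mul trmxK.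
Qed.
Lemma csub_vec p a b (X : 'M[R]_(p, a)) (Y : 'M[R]_(p, b)) :
  (forall v : 'cV[R]_a, csub (X *m v) Y) -> csub X Y.
Proof.
move=> h; apply/row_subP => i; rewrite -tr_col colE; exact: h.
Qed.
Lemma csub_brow p q a b (f : 'I_q -> 'M[R]_(p, a)) (Y : 'M[R]_(p, b)) :
  (forall j, csub (f j) Y) -> csub (brow f) Y.
Proof.
move=> h; apply: csub_vec => v; rewrite -(bcolK v) brow_mul.
apply: csub_sum => j; apply: csub_mulr'; exact: h.
Qed.
Lemma brow_csub p q a (f : 'I_q -> 'M[R]_(p, a)) j : csub (f j) (brow f).
Proof.
have -> : f j = brow f *m bcol (fun k => if k == j then 1%:M else 0 : 'M[R]_a).
  rewrite brow_mul (bigD1 j) //= eqxx mulmx1 big1 ?addr0 //.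
  by move=> k /negbTE ->; rewrite mulmx0.
exact: csub_mulr.
Qed.
Lemma csub_thin p a b (X : 'M[R]_(p, a)) (Y : 'M[R]_(p, b)) : p = 0%N -> csub X Y.
Proof. by move=> e; subst p; rewrite /csub thinmx0 sub0mx. Qed.
End Csub.

Definition ublk (R : fieldType) p a c (D : 'M[R]_(p * a, c)) (k : nat) : 'M[R]_(a, c) :=
  if insub k is Some j then bsub D j else 0.
Lemma ublk_ord (R : fieldType) p a c (D : 'M[R]_(p * a, c)) (j : 'I_p) :
  ublk D j = bsub D j.
Proof. by rewrite /ublk valK. Qed.
Lemma ublk_out (R : fieldType) p a c (D : 'M[R]_(p * a, c)) k :
  (p <= k)%N -> ublk D k = 0.
Proof. by move=> h; rewrite /ublk insubF //; apply/negbTE; rewrite -leqNgt. Qed.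

Lemma horner_mx_sum (R : fieldType) k (M : 'M[R]_k.+1) (p : {poly R}) :
  horner_mx M p = \sum_(i < size p) p`_i *: M ^+ i.
Proof.
rewrite -{1}(coefK p) poly_def rmorph_sum; apply: eq_bigr => i _.
change (horner_mx M (p`_i *: 'X^i) = p`_i *: M ^+ i).
by rewrite horner_mxZ rmorphXn /= horner_mx_X.
Qed.

Lemma CH_pow (R : fieldType) k (M : 'M[R]_k) :
  exists c : nat -> R, M ^+ k = \sum_(i < k) c i *: M ^+ i.
Proof.
case: k M => [|k] M.
  by exists (fun=> 0); rewrite big_ord0; apply/matrixP => -[].
exists (fun i => - (char_poly M)`_i).
have := Cayley_Hamilton M; rewrite horner_mx_sum size_char_poly big_ord_recr /=.
have -> : (char_poly M)`_k.+1 = 1.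
  by have := char_poly_monic M => /monicP; rewrite lead_coefE size_char_poly.
rewrite scale1r => /eqP; rewrite addrC addr_eq0 => /eqP ->.
by rewrite -sumrN; apply: eq_bigr => i _; rewrite scaleNr.
Qed.

Lemma ar8 N i : (i < N)%N -> (N - 1 - i < N)%N. Proof. lia. Qed.
Lemma ar9 N i : (i < N)%N -> (N - 1 - (N - 1 - i) = i)%N. Proof. lia. Qed.
Lemma ar10 N (j : 'I_N) : ((N - 1 - j).+1 <= N)%N. Proof. have := ltn_ord j; lia. Qed.
Lemma ar11 L k : (L <= L + k)%N. Proof. lia. Qed.

Section Main.
Variables (R : fieldType) (n m r L : nat).
Variables (A : 'M[R]_n) (B : 'M[R]_(n, m)) (C : 'M[R]_(r, n)) (Od : 'M[R]_(n, L * r)).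
Hypothesis hO : Od *m obsv A C L = 1%:M.

Local Notation N := (L * m + L * r)%N.
Local Notation Th := (Theta A B C Od).
Local Notation Pi := (Pimx R m r L).
Local Notation PP := (PPgen A B C Od).
Local Notation io := (ioh A B C L).

Definition Wm : 'M[R]_(L * m + L * r, L * m + n) :=
  block_mx 1%:M 0 (toeplitz A B C L) (obsv A C L).

Lemma ioh_Wm x0 u t : (L <= t)%N ->
  io x0 u t = Wm *m col_mx (bcol (fun k : 'I_L => u (t - L + k)%N))
                           (state A B x0 u (t - L)).
Proof.
by move=> Lt; rewrite ioh_formula // /Wm mul_block_col mul1mx mul0mx addr0 addrC.
Qed.

Lemma ioh_csubW x0 u t : (L <= t)%N -> csub (io x0 u t) Wm.
Proof. by move=> Lt; rewrite ioh_Wm //; apply: csub_mulr. Qed.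

Lemma ThW : csub (Th *m Wm) Wm.
Proof.
apply: csub_vec => z; rewrite -(vsubmxK z).
set U := usubmx z; set x := dsubmx z.
pose u k := ublk U k.
have e1 : io x u L = Wm *m col_mx U x.
  rewrite ioh_Wm // subnn /=; congr (_ *m col_mx _ _).
  by rewrite -[RHS](bcolK U); apply: bcol_ext => k; rewrite /u add0n ublk_ord.
rewrite -mulmxA -e1.
have := ioh_step B x u (leqnn L) hO; rewrite /u ublk_out // mulmx0 addr0 => <-.
exact: ioh_csubW.
Qed.

Lemma PiW : csub Pi Wm.
Proof.
apply: csub_vec => v.
pose u k := if k == L then v else 0.
have := ioh_step B 0 u (leqnn L) hO; rewrite /u eqxx => e.
have -> : Pi *m v = io 0 u L.+1 - Th *m io 0 u L by rewrite e addrC addKr.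
apply: csub_add; first by apply: ioh_csubW.
apply: csub_opp; rewrite ioh_Wm // mulmxA; apply: csub_mulr'; exact: ThW.
Qed.

Lemma PowW i : csub (Th ^+ i *m Pi) Wm.
Proof.
elim: i => [|i IH]; first by rewrite mxexp0 mul1mx PiW.
rewrite mxexpS -mulmxA; apply: csub_trans ThW; exact: csub_mull.
Qed.

Lemma PPW : csub PP Wm.
Proof. by apply: csub_brow => j; apply: PowW. Qed.

Lemma PowPP i : (i < N)%N -> csub (Th ^+ i *m Pi) PP.
Proof.
move=> hi; have := brow_csub (fun k : 'I_N => Th ^+ (N - 1 - k) *m Pi) (Ordinal (ar8 hi)).
by rewrite /= ar9.
Qed.

Lemma PowPP_N : csub (Th ^+ N *m Pi) PP.
Proof.
have [c ->] := CH_pow Th; rewrite mulmx_suml; apply: csub_sum => i.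
by rewrite -scalemxAl; apply: csub_scale; apply: PowPP.
Qed.

Lemma PowPP_le i : (i <= N)%N -> csub (Th ^+ i *m Pi) PP.
Proof.
by rewrite leq_eqVlt => /orP [/eqP -> | h]; [apply: PowPP_N | apply: PowPP].
Qed.

Lemma ThPP : csub (Th *m PP) PP.
Proof.
rewrite /PPgen brow_mull; apply: csub_brow => j.
by rewrite mulmxA -mxexpS; apply: PowPP_le; apply: ar10.
Qed.

Lemma PiPP : csub Pi PP.
Proof. by have := PowPP_le (leq0n N); rewrite mxexp0 mul1mx. Qed.

Lemma ioh_PP x0 u t0 : (L <= t0)%N -> csub (io x0 u t0) PP ->
  forall k, csub (io x0 u (t0 + k)) PP.
Proof.
move=> Lt h; elim=> [|k IH]; first by rewrite addn0.
rewrite addnS (ioh_step B x0 u _ hO); last by apply: leq_trans Lt (leq_addr _ _).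
apply: csub_add; last by apply: csub_mulr'; exact: PiPP.
by apply: csub_trans ThPP; apply: csub_mull.
Qed.

End Main.

Lemma ar12 L n k : ((L + n + k < L) = false)%N. Proof. apply/negbTE; lia. Qed.
Lemma ar13 L n k : ((L + n + k < L + n) = false)%N. Proof. apply/negbTE; lia. Qed.
Lemma ar14 L n k : (L + n + k - L - n = k)%N. Proof. lia. Qed.
Lemma ar15 L n : (L + n + L - L = L + n)%N. Proof. lia. Qed.
Lemma ar16 L n (k : 'I_n) : ((L + k < L) = false)%N. Proof. apply/negbTE; lia. Qed.
Lemma ar17 L n (k : 'I_n) : ((L + k < L + n) = true)%N. Proof. have := ltn_ord k; lia. Qed.
Lemma ar18 L k : (L + k - L = k)%N. Proof. lia. Qed.

Section Main2.
Variables (R : fieldType) (n m r L : nat).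
Variables (A : 'M[R]_n) (B : 'M[R]_(n, m)) (C : 'M[R]_(r, n)) (Od : 'M[R]_(n, L * r)).
Hypothesis hO : Od *m obsv A C L = 1%:M.
Hypothesis hc : \rank (ctrb A B n) = n.

Local Notation N := (L * m + L * r)%N.
Local Notation Th := (Theta A B C Od).
Local Notation Pi := (Pimx R m r L).
Local Notation PP := (PPgen A B C Od).
Local Notation io := (ioh A B C L).
Local Notation W := (Wm L A B C).

Lemma WPP : csub W PP.
Proof.
apply: csub_vec => z; rewrite -(vsubmxK z).
set U := usubmx z; set x := dsubmx z.
have : (x^T <= (ctrb A B n)^T)%MS.
  by apply: submx_full; rewrite /row_full mxrank_tr hc.
case/submxP => D hD.
have ex : x = ctrb A B n *m D^T by rewrite -[x]trmxK hD trmx_mul trmxK.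
pose w := D^T.
pose u k := if (k < L)%N then 0 else if (k < L + n)%N then ublk w (k - L)
            else ublk U (k - L - n).
have sL : state A B 0 u L = 0.
  have := state_addL A B 0 u 0 L; rewrite add0n => ->.
  rewrite mulmx0 add0r (_ : bcol _ = 0) ?mulmx0 //.
  by rewrite -(bcol0 R L m 1); apply: bcol_ext => k; rewrite /u add0n ltn_ord.
have sLn : state A B 0 u (L + n) = x.
  rewrite state_addL sL mulmx0 add0r ex; congr (_ *m _).
  rewrite -[RHS](bcolK w); apply: bcol_ext => k.
  by rewrite /u ar16 ar17 ar18 ublk_ord.
have h0 : csub (io 0 u L) PP.
  rewrite ioh_formula // subnn (_ : bcol _ = 0).
    by rewrite !mulmx0 addr0 col_mx0; apply: csub0.
  by rewrite -(bcol0 R L m 1); apply: bcol_ext => k; rewrite /u add0n ltn_ord.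
have := ioh_PP hO (leqnn L) h0 (n + L); rewrite addnA.
rewrite ioh_Wm ?leq_addl // ar15 sLn; congr (csub (_ *m col_mx _ _) _).
rewrite -[RHS](bcolK U); apply: bcol_ext => k.
by rewrite /u ar12 ar13 ar14 ublk_ord.
Qed.

Lemma rankW : \rank W = (L * m + n)%N.
Proof.
pose Z : 'M[R]_(L * m + n, L * m + L * r) :=
  block_mx 1%:M 0 (- (Od *m toeplitz A B C L)) Od.
have hZ : Z *m W = 1%:M.
  rewrite /Z /Wm mulmx_block !mul1mx !mul0mx !mulmx1 !mulmx0 !addr0 !add0r hO.
  by rewrite addNr -scalar_mx_block.
have : row_free W^T.
  by apply/row_freeP; exists Z^T; rewrite -trmx_mul hZ trmx1.
by rewrite /row_free mxrank_tr => /eqP.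
Qed.

Lemma rankPP : \rank PP = (L * m + n)%N.
Proof.
rewrite -rankW -mxrank_tr -[\rank W]mxrank_tr; apply/eqmx_rank.
by apply/andP; split; [exact: (PPW B hO) | exact: WPP].
Qed.

Lemma ioh_inPP x0 u t : (L <= t)%N -> csub (io x0 u t) PP.
Proof. by move=> Lt; apply: csub_trans (ioh_csubW A B C x0 u Lt) WPP. Qed.

End Main2.

Lemma delta_entry (R : realType) N (k : 'I_N) (v : 'cV[R]_N) :
  ((delta_mx k (0 : 'I_1))^T *m v) 0 0 = v k 0.
Proof. by rewrite trmx_delta -rowE mxE. Qed.

Lemma mom2_lin d (T : measurableType d) (R : realType) (mu : probability T R)
  N M (vL : T -> 'cV[R]_N) (Phi : 'M[R]_N) (Q : 'M[R]_(M, N)) :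
  normal_mom2 mu vL Phi -> normal_mom2 mu (fun w => Q *m vL w) (Q *m Phi *m Q^T).
Proof.
move=> [hg hm]; split.
  move=> a; have [mn [s2 [s0 g]]] := hg (Q^T *m a); exists mn, s2; split => //.
  have -> : (fun w => (a^T *m (Q *m vL w)) 0 0) =
            (fun w => ((Q^T *m a)^T *m vL w) 0 0).
    by apply: funext => w; rewrite trmx_mul trmxK mulmxA.
  exact: g.
have mX k : measurable_fun setT (fun w => vL w k 0).
  have [mn [s2 [_ [g _]]]] := hg (delta_mx k 0).
  by move: g; under eq_fun do rewrite delta_entry.
have iX k l : mu.-integrable setT (EFin \o (fun w => vL w k 0 * vL w l 0)).
  apply/integrableP; split; first exact/measurable_EFinP/measurable_funM.
  rewrite integral_fin_num_abs //; last exact: measurable_funM.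
  by have := hm k l; rewrite unlock => ->.
move=> i j; rewrite unlock.
have iXk k l : mu.-integrable setT
    (fun w => ((Q i k * Q j l)%:E * (vL w k 0 * vL w l 0)%:E)%E).
  exact: (integrableZl measurableT _ (iX k l)).
have iS k : mu.-integrable setT
    (fun w => (\sum_(l < N) (Q i k * Q j l)%:E * (vL w k 0 * vL w l 0)%:E)%E).
  by apply: integrable_sum => // l _; exact: iXk.
transitivity ((\int[mu]_w (\sum_(k < N) \sum_(l < N)
    ((Q i k * Q j l)%R%:E * (vL w k 0 * vL w l 0)%R%:E)))%E).
  apply: eq_integral => w _.
  rewrite (eq_bigr (fun k => (\sum_(l < N) (Q i k * Q j l * (vL w k 0 * vL w l 0)))%R%:E)); last first.
    by move=> k _; rewrite -sumEFin; apply: eq_bigr.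
  rewrite sumEFin !mxE mulr_suml; congr (_%:E).
  apply: eq_bigr => k _; rewrite mulr_sumr; apply: eq_bigr => l _.
  by rewrite mulrACA.
rewrite (integral_sum measurableT iS).
transitivity ((\sum_(k < N) \sum_(l < N) (Q i k * Q j l * Phi k l)%R%:E)%E).
  apply: eq_bigr => k _; rewrite (integral_sum measurableT (iXk k)); apply: eq_bigr => l _.
  rewrite (integralZl measurableT (iX k l)); have := hm k l; rewrite unlock => ->; by [].
rewrite (eq_bigr (fun k => (\sum_(l < N) (Q i k * Q j l * Phi k l))%R%:E)); last first.
  by move=> k _; rewrite sumEFin.
rewrite sumEFin; congr (_%:E); rewrite !mxE exchange_big /=.
apply: eq_bigr => l _; rewrite !mxE mulr_suml; apply: eq_bigr => k _.
by rewrite mulrAC.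
Qed.

Lemma quad_zero (R : realFieldType) (a b : R) : 0 <= b ->
  (forall t, 0 <= 2 * t * a + t ^+ 2 * b) -> a = 0.
Proof.
move=> b0 h.
have s0 : 0 < (b + 1)^-1 by rewrite invr_gt0; lra.
have hs : (b + 1)^-1 * (b + 1) = 1 by rewrite mulVf //; apply/eqP => e; lra.
set s := (b + 1)^-1 in s0 hs.
have := h (- a * s).
have e : 2 * (- a * s) * a + (- a * s) ^+ 2 * b = - (a ^+ 2 * s * (1 + s)).
  have sb : s * b = 1 - s by rewrite mulrDr mulr1 in hs; lra.
  have -> : 2 * (- a * s) * a + (- a * s) ^+ 2 * b =
            -2 * a ^+ 2 * s + a ^+ 2 * s * (s * b) by ring.
  rewrite sb; ring.
rewrite e oppr_ge0 => h2.
have : a ^+ 2 * (s * (1 + s)) <= 0 by rewrite mulrA.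
rewrite pmulr_lle0; last by apply: mulr_gt0 => //; lra.
by move=> ha; apply/eqP; rewrite -sqrf_eq0 eq_le ha sqr_ge0.
Qed.

Lemma psd_null (R : rcfType) N (Phi : 'M[R]_N) (z : 'cV[R]_N) : psd Phi ->
  (z^T *m Phi *m z) 0 0 = 0 -> Phi *m z = 0.
Proof.
move=> [sym pos] hz.
have key : forall w : 'cV[R]_N, (w^T *m Phi *m z) 0 0 = 0.
  move=> w.
  have szw : (z^T *m Phi *m w) 0 0 = (w^T *m Phi *m z) 0 0.
    have -> : (z^T *m Phi *m w) 0 0 = (z^T *m Phi *m w)^T 0 0 by rewrite [RHS]mxE.
    by rewrite !trmx_mul trmxK sym mulmxA.
  apply: (@quad_zero _ _ ((w^T *m Phi *m w) 0 0)); first exact: pos.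
  move=> t; have := pos (z + t *: w).
  have eT : (z + t *: w)^T = z^T + t *: w^T by apply/matrixP => i j; rewrite !mxE.
  rewrite eT !mulmxDl !mulmxDr -!scalemxAl -!scalemxAr.
  move: hz szw.
  move: (z^T *m Phi *m z) (z^T *m Phi *m w) (w^T *m Phi *m z) (w^T *m Phi *m w).
  move=> zz zw wz ww hz szw; rewrite !mxE hz szw => h.
  have -> : 2 * t * wz 0 0 + t ^+ 2 * ww 0 0 =
            0 + t * wz 0 0 + (t * wz 0 0 + t * (t * ww 0 0)) by ring.
  exact: h.
apply/eqP; apply: contraT => hn.
have hn' : (Phi *m z)^T != 0.
  by apply: contra hn => /eqP h; apply/eqP; apply: trmx_inj; rewrite h trmx0.
have := rv_norm_pos hn'; rewrite trmxK mulmxA key ltxx //.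
Qed.

Lemma posdef_proj (R : rcfType) p N (Phi : 'M[R]_N) (P : 'M[R]_(N, p)) :
  psd Phi -> csub P Phi -> P^T *m P = 1%:M -> posdef (P^T *m Phi *m P).
Proof.
move=> hpsd hPPhi hPtP; have [sym pos] := hpsd; split.
  by rewrite !trmx_mul trmxK sym mulmxA.
move=> x xn0; set z := P *m x.
have zn0 : z != 0.
  apply: contra xn0 => /eqP z0.
  have : P^T *m z = x by rewrite /z mulmxA hPtP mul1mx.
  by rewrite z0 mulmx0 => <-.
have -> : x^T *m (P^T *m Phi *m P) *m x = z^T *m Phi *m z.
  by rewrite /z trmx_mul !mulmxA.
rewrite lt_def pos andbT; apply/negP => /eqP hz0.
have Nz := psd_null hpsd hz0.
have [y ey] := csubP (csub_mulr' x hPPhi).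
have zt : z^T != 0.
  by apply: contra zn0 => /eqP h; apply/eqP; apply: trmx_inj; rewrite h trmx0.
have := rv_norm_pos zt; rewrite trmxK.
have e2 : z^T *m z = 0.
  have -> : z^T = (Phi *m y)^T by rewrite /z ey.
  by rewrite trmx_mul sym -mulmxA Nz mulmx0.
by rewrite e2 mxE ltxx.
Qed.

Unset Implicit Arguments.
Set Strict Implicit.

Lemma gs_rank (R : rcfType) p N k (X : 'M[R]_(p, N)) : \rank X = k ->
  exists Y : 'M[R]_(k, N), Y *m Y^T = 1%:M /\ (Y == X)%MS.
Proof.
move=> e.
subst k.
have H := @gs R _ _ (row_base X) (row_base_free X).
case: H => Y [h1 h2].
exists Y; split => //; apply/eqmxP.
exact: eqmx_trans (eqmxP h2) (eq_row_base X).
Qed.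

Lemma arL L t : (L <= t)%N -> (L + (t - L))%N = t. Proof. by move=> h; rewrite subnKC. Qed.

Theorem lemma3 (R : realType) (n m r L : nat)
  (A : 'M[R]_n) (B : 'M[R]_(n, m)) (C : 'M[R]_(r, n)) (Od : 'M[R]_(n, L * r)) :
  \rank (ctrb A B n) = n ->          (* (A,B) controllable *)
  \rank (obsv A C n) = n ->          (* (A,C) observable, so (A,B,C) minimal *)
  schur A ->
  \rank (obsv A C L) = n ->
  is_mp_pinv (obsv A C L) Od ->      (* Od = O_L^dagger *)
  let Th := Theta A B C Od in
  let Pi := Pimx R m r L in
  let PP := PPgen A B C Od in
  (exists P : 'M[R]_(L * m + L * r, L * m + n),
      same_image P PP /\ P^T *m P = 1%:M) /\
  (forall P : 'M[R]_(L * m + L * r, L * m + n),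
      same_image P PP -> P^T *m P = 1%:M ->
      (forall (x0 : 'cV[R]_n) (u : nat -> 'cV[R]_m)
              (vhat : nat -> 'cV[R]_(L * m + n)),
          let v := ioh A B C L x0 u in
          vhat L = P^T *m v L ->
          (forall t, (L <= t)%N ->
             vhat t.+1 = P^T *m Th *m P *m vhat t + P^T *m Pi *m u t) ->
          forall t, (L <= t)%N -> v t = P *m vhat t) /\
      (forall (d : measure_display) (T : measurableType d) (mu : probability T R)
              (vL : T -> 'cV[R]_(L * m + L * r)) (Phi : 'M[R]_(L * m + L * r)),
          psd Phi -> same_image Phi PP -> normal_mom2 mu vL Phi ->
          normal_mom2 mu (fun w => P^T *m vL w) (P^T *m Phi *m P) /\
          posdef (P^T *m Phi *m P))).
Proof.
move=> hc _ _ hrk hmp Th Pi PP.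
have hO := Od_obsv hrk hmp.
have rk : \rank PP^T = (L * m + n)%N by rewrite mxrank_tr /PP (rankPP hO hc).
split.
  have [Y [hY eY]] := @gs_rank _ _ _ _ _ rk.
  exists Y^T; split; first by rewrite /same_image trmxK.
  by rewrite trmxK.
move=> P sP PtP.
case/andP: (sP) => sP1 sP2.
have proj z : csub z PP -> P *m (P^T *m z) = z.
  move=> hz; have [D ->] := csubP (csub_trans hz sP2).
  by rewrite !mulmxA -(mulmxA P P^T P) PtP mulmx1.
split.
  move=> x0 u vhat v hL hstep.
  have main k : v (L + k)%N = P *m vhat (L + k)%N.
    elim: k => [|k IH]; first by rewrite addn0 hL proj // /v ioh_inPP.
    rewrite addnS hstep ?leq_addr //.
    have -> : P^T *m Th *m P *m vhat (L + k)%N + P^T *m Pi *m u (L + k)%N =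
              P^T *m (Th *m (P *m vhat (L + k)%N) + Pi *m u (L + k)%N).
      by rewrite [in RHS]mulmxDr !mulmxA.
    rewrite -IH /v /Th /Pi -(ioh_step B x0 u (leq_addr k L) hO) proj //.
    exact: (ioh_inPP hO hc x0 u (leq_trans (leq_addr k L) (leqnSn _))).
  by move=> t Lt; rewrite -(@arL _ _ Lt) main.
move=> d T mu vL Phi hpsd hsame hnorm; split.
  by have := mom2_lin P^T hnorm; rewrite trmxK.
apply: posdef_proj => //.
case/andP: hsame => _ h2; exact: submx_trans sP1 h2.
Qed.
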